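(* Let $G$ be a graph without isolated vertices, $S$ a DDS of $G$, and $u\in\widehat S$ with $P_S(u)\neq\emptyset$. Let $v_u\in P_S(u)$, and let $P'=\{v\in P_S(u): o_S(v)\le o_S(v_u)\}$. Then: (1) $S^1$ is a dominating sequence of $G$; (2) $S_{u\to v_u}$ is a DDS of $G$ and $\widehat{S_{u\to v_u}}=\widehat S$; (3) if $S$ is a GDDS of $G$, then so is $S_{u\to v_u}$; (4) $P'\cup(\widehat{S^1}\setminus\{u\})\subseteq\widehat{(S_{u\to v_u})^1}$.
   Context: Graphs are finite, simple, undirected; $N[v]$ closed neighborhood. A sequence $S=(v_1,\dots,v_k)$ of distinct vertices is a double neighborhood sequence (DNS) if for each $i$ some $w\in N[v_i]$ satisfies $|\{j<i:w\in N[v_j]\}|\le1$; a DDS if moreover its vertex set $D$ satisfies $|N[w]\cap D|\ge2$ for all $w$; a GDDS is a DDS of maximum length. A sequence is legal if $N[v_i]\setminus\bigcup_{j<i}N[v_j]\neq\emptyset$ for all $i\ge2$, and a dominating sequence if moreover its vertex set is a dominating set. $\widehat S$ is the vertex set of $S$, $o_S(v_i)=i$ its position. $N_S^1[v_i]=N[v_i]\setminus\bigcup_{j<i}N[v_j]$, $N_S^2[v_i]=\{w\in N[v_i]:|\{j<i:w\in N[v_j]\}|=1\}$. $S^1$ is the subsequence of $S$ of vertices $v$ with $N_S^1[v]\neq\emptyset$; $S^2$ the subsequence of the remaining ones. For $u\in\widehat{S^1}$, $P_S(u)=\{v\in\widehat{S^2}: N_S^1[u]\cap N_S^2[v]\neq\emptyset\}$.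 For $u,v\in\widehat S$ with $o_S(u)<o_S(v)$, $S_{u\to v}$ is the sequence obtained from $S$ by removing $u$ and reinserting it immediately after $v$. *)

(* Defs.v *)
From mathcomp Require Import all_boot.
Set Implicit Arguments. Unset Strict Implicit. Unset Printing Implicit Defensive.

Section Graph.
Variables (T : finType) (e : rel T).

Definition no_isolated := forall v : T, exists w, e v w.

Definition Nc (v : T) : {set T} := [set w | (w == v) || e v w].

Definition cnt (s : seq T) (w : T) : nat := count (fun x => w \in Nc x) s.

Definition is_DNS (S : seq T) : Prop :=
  uniq S /\
  forall s1 v s2, S = s1 ++ v :: s2 -> exists2 w, w \in Nc v & cnt s1 w <= 1.

Definition vset (S : seq T) : {set T} := [set x in S].

Definition is_DDS (S : seq T) : Prop :=
  is_DNS S /\ forall w : T, 2 <= #|Nc w :&: vset S|.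

Definition is_GDDS (S : seq T) : Prop :=
  is_DDS S /\ forall S' : seq T, is_DDS S' -> size S' <= size S.

Definition is_dominating (D : {set T}) : Prop :=
  forall w : T, exists2 x, x \in D & w \in Nc x.

Definition is_legal (S : seq T) : Prop :=
  uniq S /\
  forall s1 v s2, S = s1 ++ v :: s2 -> s1 != [::] ->
    Nc v :\: \bigcup_(x <- s1) Nc x != set0.

Definition is_dominating_seq (S : seq T) : Prop :=
  is_legal S /\ is_dominating (vset S).

(* o_S(v) = index v S (0-based); the prefix of S before v *)
Definition pre (S : seq T) (v : T) : seq T := take (index v S) S.

Definition N1 (S : seq T) (v : T) : {set T} :=
  Nc v :\: \bigcup_(x <- pre S v) Nc x.

Definition N2 (S : seq T) (v : T) : {set T} :=
  [set w in Nc v | cnt (pre S v) w == 1].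

Definition S1 (S : seq T) : seq T := [seq v <- S | N1 S v != set0].
Definition S2 (S : seq T) : seq T := [seq v <- S | N1 S v == set0].

Definition PS (S : seq T) (u : T) : {set T} :=
  [set v in S2 S | N1 S u :&: N2 S v != set0].

Definition move_after (S : seq T) (u v : T) : seq T :=
  let s := rem u S in
  take (index v s).+1 s ++ u :: drop (index v s).+1 s.

End Graph.

(* Main.v *)
Require Import Defs.
From mathcomp Require Import all_boot.
From mathcomp Require Import zify.

Set Implicit Arguments. Unset Strict Implicit. Unset Printing Implicit Defensive.

Ltac normc := repeat (rewrite -catA /=).

Section Aux.
Variables (T : finType) (e : rel T).

Lemma cnt_cat s1 s2 w : cnt e (s1 ++ s2) w = cnt e s1 w + cnt e s2 w.
Proof. by rewrite /cnt count_cat. Qed.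
Lemma cnt_cons x s w : cnt e (x :: s) w = (w \in Nc e x) + cnt e s w.
Proof. by []. Qed.

Lemma bigcup_cnt s w : (w \in \bigcup_(x <- s) Nc e x) = (0 < cnt e s w).
Proof.
elim: s => [|x s IH]; first by rewrite big_nil inE.
by rewrite big_cons inE IH cnt_cons; case: (w \in Nc e x).
Qed.

Lemma index_mid (s1 s2 : seq T) x :
  uniq (s1 ++ x :: s2) -> index x (s1 ++ x :: s2) = size s1.
Proof.
rewrite cat_uniq => /and3P [_ /hasPn H _].
have xn := H x (mem_head _ _).
by rewrite index_cat (negbTE xn) /= eqxx addn0.
Qed.

Lemma pre_mid (s1 s2 : seq T) x : uniq (s1 ++ x :: s2) -> pre (s1 ++ x :: s2) x = s1.
Proof. by move=> U; rewrite /pre index_mid // take_size_cat. Qed.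

Lemma mid_eq (s1 s2 t1 t2 : seq T) x : uniq (s1 ++ x :: s2) ->
  s1 ++ x :: s2 = t1 ++ x :: t2 -> s1 = t1.
Proof.
move=> U E; have U' := U; rewrite E in U'.
by rewrite -(pre_mid U) E pre_mid.
Qed.

Lemma take_mid (s1 s2 : seq T) x : take (size s1).+1 (s1 ++ x :: s2) = s1 ++ [:: x].
Proof. by elim: s1 => [|y s IH] /=; [rewrite take0 | rewrite IH]. Qed.

Lemma drop_mid (s1 s2 : seq T) x : drop (size s1).+1 (s1 ++ x :: s2) = s2.
Proof. by elim: s1 => [|y s IH] /=; [rewrite drop0 | rewrite IH]. Qed.

Lemma N1_mid_ex (p1 : seq T) x p2 : uniq (p1 ++ x :: p2) ->
  N1 e (p1 ++ x :: p2) x != set0 -> exists2 w, w \in Nc e x & cnt e p1 w = 0.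
Proof.
move=> U; rewrite /N1 pre_mid // => /set0Pn [w].
rewrite inE bigcup_cnt => /andP [H1 H2]; exists w => //.
by move: H1; rewrite lt0n negbK => /eqP.
Qed.

Lemma mid_N1 (p1 : seq T) x p2 w : uniq (p1 ++ x :: p2) ->
  w \in Nc e x -> cnt e p1 w = 0 -> N1 e (p1 ++ x :: p2) x != set0.
Proof.
move=> U H1 H2; rewrite /N1 pre_mid //; apply/set0Pn; exists w.
by rewrite inE bigcup_cnt H2 H1.
Qed.

Lemma split_first (P : pred T) s : has P s ->
  exists p1 x p2, [/\ s = p1 ++ x :: p2, P x & ~~ has P p1].
Proof.
elim: s => [|y s IH] //= /orP [Py | Hs].
  by exists [::], y, s.
case Py: (P y); first by exists [::], y, s.
have [p1 [x [p2 [-> Px Hp]]]] := IH Hs.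
by exists (y :: p1), x, p2; rewrite /= Py Hp.
Qed.

Lemma cnt_filter (P : pred T) s w : cnt e (filter P s) w <= cnt e s w.
Proof.
rewrite /cnt; elim: s => //= y s IH; case: (P y) => /=; lia.
Qed.

Lemma uniq_drop_mid (A X : seq T) u : uniq (A ++ u :: X) -> uniq (A ++ X).
Proof.
rewrite !cat_uniq /= => /and3P [-> /norP [_ ->] /andP [_ ->]] //.
Qed.

Lemma uniq_suffix (A X : seq T) : uniq (A ++ X) -> uniq X.
Proof. by rewrite cat_uniq => /and3P []. Qed.

Lemma move_after_eq (A B C : seq T) (u vu : T) : uniq (A ++ u :: B ++ vu :: C) ->
  move_after (A ++ u :: B ++ vu :: C) u vu = A ++ B ++ vu :: u :: C.
Proof.
move=> U; rewrite /move_after /= remE index_mid //.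
have -> : take (size A) (A ++ u :: B ++ vu :: C) = A by rewrite take_size_cat.
rewrite drop_mid.
have U2 := uniq_drop_mid U; rewrite catA in U2 *.
by rewrite index_mid // take_mid drop_mid -!catA.
Qed.

Lemma index_after (s1 : seq T) x s2 y : uniq (s1 ++ x :: s2) -> y \in s2 ->
  size s1 < index y (s1 ++ x :: s2).
Proof.
move=> U yin; move: U; case/splitPr: yin => t1 t2 U.
have E : s1 ++ x :: t1 ++ y :: t2 = (s1 ++ x :: t1) ++ y :: t2 by rewrite -catA.
rewrite E index_mid -?E // size_cat /=; lia.
Qed.

Lemma PS_split (A R : seq T) (u v : T) : uniq (A ++ u :: R) ->
  v \in PS e (A ++ u :: R) u ->
  exists B C w, [/\ R = B ++ v :: C, w \in Nc e u, w \in Nc e v,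
     cnt e A w = 0 & cnt e B w = 0].
Proof.
move=> U; rewrite inE => /andP [vS2 /set0Pn [w]].
rewrite inE => /andP [wN1 wN2].
move: wN1; rewrite /N1 pre_mid // inE bigcup_cnt => /andP [c0 wu].
move: c0; rewrite lt0n negbK => /eqP c0.
move: vS2; rewrite mem_filter => /andP [N1v].
rewrite mem_cat in_cons => /or3P [vA | /eqP vu | vR].
- move: U wN2 c0 N1v; case/splitPr: vA => A1 A2 U wN2 c0 N1v.
  have E : (A1 ++ v :: A2) ++ u :: R = A1 ++ v :: (A2 ++ u :: R) by rewrite -catA.
  move: wN2; rewrite /N2 E pre_mid -?E // inE => /andP [_ /eqP c1].
  move: c0; rewrite !cnt_cat cnt_cons c1; lia.
- move: N1v; rewrite vu => /eqP H.
  have : w \in N1 e (A ++ u :: R) u by rewrite /N1 pre_mid // inE bigcup_cnt c0 wu.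
  by rewrite H inE.
- move: U wN2; case/splitPr: vR => B C U wN2.
  have E : A ++ u :: B ++ v :: C = (A ++ u :: B) ++ v :: C by rewrite -catA.
  move: wN2; rewrite /N2 E pre_mid -?E // inE => /andP [wv /eqP c1].
  exists B, C, w; split => //.
  move: c1; rewrite cnt_cat cnt_cons wu c0; lia.
Qed.

Lemma Kmain (A B C : seq T) (u vu x : T) : x \in A ++ B ++ vu :: u :: C -> x != u ->
  exists p1 p2 q1 q2, [/\ A ++ u :: B ++ vu :: C = p1 ++ x :: p2,
     A ++ B ++ vu :: u :: C = q1 ++ x :: q2 & forall w, cnt e q1 w <= cnt e p1 w].
Proof.
rewrite !mem_cat !in_cons => H xu.
case/or3P: H => [xA | xB | /or3P [/eqP xv | xu' | xC]].
- case/splitPr: xA => A1 A2.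
  exists A1, (A2 ++ u :: B ++ vu :: C), A1, (A2 ++ B ++ vu :: u :: C).
  by split => //; rewrite -catA.
- case/splitPr: xB => B1 B2.
  exists (A ++ u :: B1), (B2 ++ vu :: C), (A ++ B1), (B2 ++ vu :: u :: C).
  split; try by normc.
  by move=> w; rewrite !cnt_cat cnt_cons; lia.
- subst x; exists (A ++ u :: B), C, (A ++ B), (u :: C).
  split; try by normc.
  by move=> w; rewrite !cnt_cat cnt_cons; lia.
- by rewrite xu' in xu.
- case/splitPr: xC => C1 C2.
  exists (A ++ u :: B ++ vu :: C1), C2, (A ++ B ++ vu :: u :: C1), C2.
  split; try by normc.
  by move=> w; rewrite !cnt_cat !cnt_cons !cnt_cat !cnt_cons; lia.
Qed.

Lemma part1 (S : seq T) : symmetric e -> is_DDS e S -> is_dominating_seq e (S1 e S).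
Proof.
move=> es [[US HD] HDom]; split.
  split; first exact: filter_uniq.
  move=> s1 v s2 E _.
  have : v \in S1 e S by rewrite E mem_cat mem_head orbT.
  rewrite mem_filter => /andP [N1v vS].
  move: US N1v E; case/splitPr: vS => p1 p2 US N1v E.
  have [w wv cw] := N1_mid_ex US N1v.
  have UF := filter_uniq (fun v0 => N1 e (p1 ++ v :: p2) v0 != set0) US.
  move: E UF; rewrite /S1 filter_cat /= N1v => E UF.
  rewrite E in UF.
  have Es := mid_eq UF (esym E).
  apply/set0Pn; exists w; rewrite inE bigcup_cnt wv andbT Es -leqNgt.
  by rewrite -cw cnt_filter.
move=> w.
have /set0Pn [y] : Nc e w :&: vset S != set0.
  by rewrite -card_gt0; apply: leq_trans (HDom w).
rewrite !inE => /andP [yw yS].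
have wy : w \in Nc e y.
  rewrite inE; case/orP: yw => [/eqP -> | ewy]; first by rewrite eqxx.
  by rewrite es ewy orbT.
have /split_first [p1 [x [p2 [ES Px Hp]]]] : has (fun x => w \in Nc e x) S.
  by apply/hasP; exists y.
exists x => //.
rewrite /vset inE mem_filter ES mem_cat mem_head orbT andbT.
rewrite ES in US; apply: (mid_N1 US Px).
by apply/eqP; rewrite -leqn0 leqNgt -has_count.
Qed.

End Aux.

Theorem lemma1 (T : finType) (e : rel T)
  (e_sym : symmetric e) (e_irr : irreflexive e)
  (noiso : no_isolated e) (S : seq T) (hS : is_DDS e S)
  (u : T) (hu : u \in S) (hP : PS e S u != set0)
  (vu : T) (hvu : vu \in PS e S u) :
  let P' := [set v in PS e S u | index v S <= index vu S] in
  let S' := move_after S u vu in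
  [/\ is_dominating_seq e (S1 e S),
      is_DDS e S' /\ vset S' = vset S,
      (is_GDDS e S -> is_GDDS e S') &
      P' :|: (vset (S1 e S) :\ u) \subset vset (S1 e S')].
Proof.
have H1 := part1 e_sym hS.
have [A [R ES]] : exists A R, S = A ++ u :: R.
  by case/splitPr: hu => A R; exists A, R.
subst S.
have US := hS.1.1.
have [B [C [w [ER wu wvu cA cB]]]] := PS_split US hvu.
subst R.
rewrite (move_after_eq US).
move=> P' S'.
have Hperm : perm_eq (A ++ u :: B ++ vu :: C) S'.
  by apply/permP => p; rewrite /S' /= !count_cat /= !count_cat /=; lia.
have US' : uniq S' by rewrite -(perm_uniq Hperm).
have Hvset : vset S' = vset (A ++ u :: B ++ vu :: C).
  by apply/setP => x; rewrite /vset !inE (perm_mem Hperm).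
have DNS' : is_DNS e S'.
  split => // s1 v s2 Ev.
  have vS' : v \in S' by rewrite Ev mem_cat mem_head orbT.
  case: (eqVneq v u) => [Evu | vnu].
  - subst v.
    have E2 : S' = (A ++ B ++ [:: vu]) ++ u :: C by rewrite /S'; normc.
    have Es : s1 = A ++ B ++ [:: vu].
      by apply: (mid_eq (x := u) (s2 := s2) (t2 := C)); rewrite -Ev // -E2.
    exists w => //; rewrite Es !cnt_cat cnt_cons cA cB wvu; done.
  - have [p1 [p2 [q1 [q2 [Ep Eq Hc]]]]] := Kmain e vS' vnu.
    have Es : s1 = q1.
      by apply: (mid_eq (x := v) (s2 := s2) (t2 := q2)); rewrite -Ev // -Eq.
    have [w' w'v cw'] := hS.1.2 _ _ _ Ep.
    by exists w' => //; rewrite Es; apply: leq_trans (Hc w') cw'.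
have DDS' : is_DDS e S'.
  by split => // w'; rewrite Hvset; exact: hS.2.
split => //.
- move=> [_ Hmax]; split => // S'' H.
  by rewrite -(perm_size Hperm); exact: Hmax.
apply/subsetP => x Hx; rewrite /vset in_set mem_filter.
move: Hx; rewrite /P' in_setU => /orP [| ].
- rewrite in_set => /andP [xP xi].
  have [B' [C' [w' [ER' w'u w'x cA' cB']]]] := PS_split US xP.
  have UR : uniq (B ++ vu :: C).
    by move: US => /uniq_suffix; rewrite cons_uniq => /andP [].
  have : x \in B ++ vu :: C by rewrite ER' mem_cat mem_head orbT.
  rewrite mem_cat in_cons => /or3P [xB | /eqP xv | xC].
  + have [B1 [B2 EB]] : exists B1 B2, B = B1 ++ x :: B2.
      by case/splitPr: xB => B1 B2; exists B1, B2.
    have EE : B ++ vu :: C = B1 ++ x :: B2 ++ vu :: C by rewrite EB; normc.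
    have EB1 : B1 = B'.
      apply: (mid_eq (x := x) (s2 := B2 ++ vu :: C) (t2 := C')).
        by rewrite -EE.
      by rewrite -EE ER'.
    have E2 : S' = (A ++ B1) ++ x :: (B2 ++ vu :: u :: C) by rewrite /S' EB; normc.
    rewrite E2 mem_cat mem_head orbT andbT.
    apply: (mid_N1 (w := w')) => //; first by rewrite -E2.
    by rewrite cnt_cat cA' EB1 cB'.
  + subst x.
    have EB1 : B = B'.
      by apply: (mid_eq (x := vu) (s2 := C) (t2 := C')).
    have E2 : S' = (A ++ B) ++ vu :: (u :: C) by rewrite /S'; normc.
    rewrite E2 mem_cat mem_head orbT andbT.
    apply: (mid_N1 (w := w')) => //; first by rewrite -E2.
    by rewrite cnt_cat cA' EB1 cB'.
  + exfalso.
    have E2 : A ++ u :: B ++ vu :: C = (A ++ u :: B) ++ vu :: C by rewrite -catA.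
    move: xi; rewrite E2 index_mid -?E2 //.
    have := index_after (s1 := A ++ u :: B) (x := vu) (s2 := C) (y := x).
    rewrite -E2 => /(_ US xC); lia.
- rewrite /vset !inE => /andP [xnu xS1].
  move: xS1; rewrite mem_filter => /andP [N1x xS].
  have xS' : x \in S' by rewrite -(perm_mem Hperm).
  have [p1 [p2 [q1 [q2 [Ep Eq Hc]]]]] := Kmain e xS' xnu.
  rewrite xS' andbT.
  move: N1x; rewrite Ep => N1x.
  have Up : uniq (p1 ++ x :: p2) by rewrite -Ep.
  have [w' w'x cw'] := N1_mid_ex Up N1x.
  rewrite /S' Eq; apply: (mid_N1 (w := w')) => //; first by rewrite -Eq.
  by apply/eqP; rewrite -leqn0 -cw' Hc.
Qed.
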